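(* Let $K$ be a number field, $0<\alpha<1$, and suppose there is $\mathcal{C}_K>0$ with $|f_1(x,K)|\leq\mathcal{C}_K x^{\alpha}$ for all $x\geq1$. Then for all $x\geq1$, $$|f_2(x,K)|\leq\mathcal{C}_K x^{\alpha}\left(\log x+\frac{1-x^{-\alpha}}{\alpha}\right).$$
   Context: Write $\zeta_K(s)=\sum_{n\geq1}c_K(n)n^{-s}$ for the Dedekind zeta function of $K$ ($c_K(n)$ = number of ideals of $\mathcal{O}_K$ of norm $n$) and $\rho_K$ for its residue at $s=1$. Define $f_1(x,K):=\sum_{n\leq x}c_K(n)-\rho_K x$ and $f_2(x,K):=\sum_{n\leq x}c_K(n)\log n-\rho_K(x\log x-x+1)$. *)

(* Defs.v *)
From HB Require Import structures.
From mathcomp Require Import all_boot all_order all_algebra all_field.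
From mathcomp Require Import all_classical all_reals all_analysis.
From mathcomp Require Import finmap.
Set Implicit Arguments. Unset Strict Implicit. Unset Printing Implicit Defensive.
Import Order.TTheory GRing.Theory Num.Theory numFieldNormedType.Exports.
Local Open Scope classical_set_scope.
Local Open Scope ring_scope.

Section NumberField.
Variable K : fieldExtType rat.

Definition OK (x : K) : Prop :=
  exists p : {poly int}, p \is monic /\ root (map_poly (fun z : int => z%:~R : K) p) x.

Definition is_ideal (I : set K) : Prop :=
  [/\ I `<=` OK, I 0,
      (forall a b, I a -> I b -> I (a - b)) &
      (forall r a, OK r -> I a -> I (r * a))].

(* Absolute norm: N(I) = n iff O_K/I has exactly n elements, i.e. there are n
   elements of O_K pairwise incongruent mod I representing every class.
   (The zero ideal has no finite norm.) *)
Definition has_norm (I : set K) (n : nat) : Prop :=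
  exists s : seq K,
    [/\ size s = n, (forall r, r \in s -> OK r),
        (forall i j, (i < n)%N -> (j < n)%N -> I (s`_i - s`_j) -> i = j) &
        (forall a, OK a -> exists2 i, (i < n)%N & I (a - s`_i))].

Definition ideals_of_norm (n : nat) : set (set K) :=
  [set I : set K | is_ideal I /\ has_norm I n].

(* (fset_set of a finite set is that set as a finite set; the set is finite.) *)
Definition cK (n : nat) : nat := size (enum_fset (fset_set (ideals_of_norm n))).

Variable R : realType.

Definition zetaK (s : R) : R :=
  limn (fun N : nat => \sum_(1 <= n < N) ((cK n)%:R * (n%:R `^ (- s)))).

Definition rhoK : R := lim ((fun s : R => (s - 1) * zetaK s) @ (1 : R)^'+).

Definition f1 (x : R) : R :=
  \sum_(1 <= n < (Num.truncn x).+1) (cK n)%:R - rhoK * x.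

Definition f2 (x : R) : R :=
  \sum_(1 <= n < (Num.truncn x).+1) (cK n)%:R * ln (n%:R : R)
  - rhoK * (x * ln x - x + 1).

End NumberField.

(* Main.v *)
Require Import Defs.
From HB Require Import structures.
From mathcomp Require Import all_boot all_order all_algebra all_field.
From mathcomp Require Import all_classical all_reals all_analysis.
From mathcomp Require Import ring lra.
Import Order.TTheory GRing.Theory Num.Theory numFieldNormedType.Exports.
Local Open Scope ring_scope.
Lemma phi_mono (R : realType) (C al A rho e a b : R) :
  0 < a -> a <= b -> 0 < al -> `|e| <= 1 ->
  (forall s, a < s -> s < b -> `|A - rho * s| <= C * s `^ al) ->
  C / al * a `^ al + e * (rho * a - A * ln a) <=
  C / al * b `^ al + e * (rho * b - A * ln b).
Proof.
move=> a0 ab al0 e1 H.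
case: (eqVneq a b) => [->|neab]; first by [].
have altb : a < b by rewrite lt_neqAle neab.
pose phi : R -> R := (C / al) \*: (fun y : R => y `^ al) + e \*: (rho \*: (@id R) - A \*: (@ln R)).
pose dphi := fun x : R => (C / al) *: (al * x `^ (al - 1)) + e *: (rho *: 1 - A *: x^-1).
have D (x : R) : 0 < x -> is_derive x 1 phi (dphi x).
  move=> x0; apply: is_deriveD; first exact: is_deriveZ (is_derive1_powR _ x0).
  apply: is_deriveZ; apply: is_deriveB; apply: is_deriveZ => //.
  exact: is_derive1_ln.
suff: 0 <= phi b - phi a by rewrite subr_ge0.
have [c cab ->] : exists2 c, c \in `]a, b[ & phi b - phi a = dphi c * (b - a).
  apply: MVT => //.
    move=> x; rewrite in_itv /= => /andP[ax _]; apply: D; exact: lt_trans ax.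
  apply: continuous_in_subspaceT => x; rewrite inE /= in_itv /= => /andP[ax _].
  apply: differentiable_continuous; apply/derivable1_diffP.
  have := D x (lt_le_trans a0 ax); by case.
rewrite mulr_ge0 ?subr_ge0 //.
move: cab; rewrite in_itv /= => /andP[ac cb].
have c0 : 0 < c by exact: lt_trans ac.
have E : dphi c = C * c `^ al / c + e * (rho - A / c).
  rewrite /dphi /= powRB; last by rewrite (gt_eqF c0) implybT.
  rewrite powRr1 ?ltW //.
  rewrite /GRing.scale /=.
  by field; rewrite !gt_eqF.
have h : `|e * (rho - A / c)| <= C * c `^ al / c.
  rewrite normrM; apply: le_trans (ler_wpM2r (normr_ge0 _) e1) _; rewrite mul1r.
  have -> : rho - A / c = - ((A - rho * c) / c) by field; rewrite gt_eqF.
  rewrite normrN normrM normfV (gtr0_norm c0).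
  by rewrite ler_pM2r ?invr_gt0 //; apply: H.
suff : 0 <= C * c `^ al / c + e * (rho - A / c) by rewrite -E.
move: h; rewrite ler_norml => /andP[h1 _].
lra.
Qed.

Lemma intra (R : realType) (C al A rho L : R) (k : nat) (t : R) :
  (1 <= k)%N -> 0 < al -> k%:R <= t -> t <= k%:R + 1 ->
  (forall s : R, k%:R < s -> s < k%:R + 1 -> `|A - rho * s| <= C * s `^ al) ->
  `|(L - A * ln t + rho * (t - 1)) - (L - A * ln k%:R + rho * (k%:R - 1))|
    <= C / al * (t `^ al - k%:R `^ al).
Proof.
move=> k1 al0 kt tk H.
have k0 : 0 < (k%:R : R) by rewrite ltr0n.
have H' : forall s, k%:R < s -> s < t -> `|A - rho * s| <= C * s `^ al.
  by move=> s ks st; apply: H => //; exact: lt_le_trans tk.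
have e1 : `|(1:R)| <= 1 by rewrite normr1.
have e2 : `|(-1:R)| <= 1 by rewrite normrN normr1.
have h1 := @phi_mono R C al A rho 1 _ _ k0 kt al0 e1 H'.
have h2 := @phi_mono R C al A rho (-1) _ _ k0 kt al0 e2 H'.
rewrite ler_norml; apply/andP; split; lra.
Qed.

Lemma accum (R : realType) (C al rho : R) (c : nat -> R) (k : nat) :
  0 < al -> 0 <= C ->
  (forall s : R, 1 <= s ->
     `|\sum_(1 <= n < (Num.truncn s).+1) c n - rho * s| <= C * s `^ al) ->
  (1 <= k)%N ->
  `|\sum_(1 <= n < k.+1) c n * ln (n%:R : R) - (\sum_(1 <= n < k.+1) c n) * ln (k%:R : R)
     + rho * (k%:R - 1)| <= C / al * ((k%:R : R) `^ al - 1).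
Proof.
move=> al0 C0 hf; elim: k => [//|k IH] _.
case: k IH => [_|k IH].
  rewrite big_nat1 ln1 powR1 !(mulr0, subrr, addr0, normr0) //.
rewrite big_nat_recr //= [X in _ - X * _]big_nat_recr //=.
set L := \sum_(1 <= i < k.+2) c i * ln (i%:R : R).
set A := \sum_(1 <= i < k.+2) c i.
have IH' : `|L - A * ln ((k.+1)%:R : R) + rho * ((k.+1)%:R - 1)| <= C / al * (((k.+1)%:R : R) `^ al - 1) by exact: IH.
have -> : L + c k.+2 * ln (k.+2)%:R - (A + c k.+2) * ln (k.+2)%:R + rho * ((k.+2)%:R - 1)
   = (L - A * ln (k.+2)%:R + rho * ((k.+2)%:R - 1)) by ring.
have kt : ((k.+1)%:R : R) <= (k.+2)%:R by rewrite ler_nat.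
have tk : ((k.+2)%:R : R) <= (k.+1)%:R + 1 by rewrite natr1.
have Hs : forall s : R, (k.+1)%:R < s -> s < (k.+1)%:R + 1 -> `|A - rho * s| <= C * s `^ al.
  move=> s ks sk.
  have ts : Num.truncn s = k.+1.
    by apply: truncn_def; rewrite (ltW ks) /= -natr1.
  have s1 : 1 <= s.
    apply: le_trans (ltW ks); by rewrite ler1n.
  by have := hf s s1; rewrite ts.
have hi := @intra R C al A rho L k.+1 (k.+2)%:R isT al0 kt tk Hs.
rewrite ler_norml in hi; rewrite ler_norml in IH'; rewrite ler_norml; have [h1 h2] := ssrbool.andP hi; have [h3 h4] := ssrbool.andP IH'.
apply/ssrbool.andP; split; lra.
Qed.

Theorem lemma2 (K : fieldExtType rat) (R : realType) (alpha CK : R) :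
  0 < alpha -> alpha < 1 -> 0 < CK ->
  (forall x : R, 1 <= x -> `|f1 K x| <= CK * x `^ alpha) ->
  forall x : R, 1 <= x ->
    `|f2 K x| <= CK * x `^ alpha * (ln x + (1 - x `^ (- alpha)) / alpha).
Proof.
move=> al0 al1 C0 hf1 x x1.
pose c := fun n : nat => ((cK K n)%:R : R).
have hf : forall s : R, 1 <= s ->
     `|\sum_(1 <= n < (Num.truncn s).+1) c n - (@rhoK K R) * s| <= CK * s `^ alpha.
  by move=> s s1; exact: hf1 s s1.
have x0 : 0 <= x by exact: le_trans x1.
have F1 := hf x x1.
rewrite /f2.
set k := Num.truncn x.
have k1 : (1 <= k)%N by rewrite truncn_gt0.
have /andP[kx xk] := truncn_itv x0.
rewrite -/k -natr1 in xk.
have P := @accum R CK alpha ((@rhoK K R)) c k al0 (ltW C0) hf k1.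
set L := \sum_(1 <= n < k.+1) c n * ln (n%:R : R) in P *.
set A := \sum_(1 <= n < k.+1) c n in P F1.
have Hs : forall s : R, k%:R < s -> s < k%:R + 1 -> `|A - (@rhoK K R) * s| <= CK * s `^ alpha.
  move=> s ks sk.
  have ts : Num.truncn s = k.
    by apply: truncn_def; rewrite (ltW ks) /= -natr1.
  have s1 : 1 <= s.
    apply: le_trans (ltW ks); by rewrite ler1n.
  by have := hf s s1; rewrite ts.
have Q := @intra R CK alpha A ((@rhoK K R)) L k x k1 al0 kx (ltW xk) Hs.
have E : CK * x `^ alpha * (ln x + (1 - x `^ (- alpha)) / alpha)
   = CK * x `^ alpha * ln x + CK / alpha * (x `^ alpha - 1).
  rewrite powRN; field.
  have xp : 0 < x by exact: lt_le_trans x1.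
  by rewrite (gt_eqF al0) (gt_eqF (powR_gt0 alpha xp)).
rewrite E.
have lnx : 0 <= ln x by exact: ln_ge0.
have T1 : `|(A - (@rhoK K R) * x) * ln x| <= CK * x `^ alpha * ln x.
  by rewrite normrM (ger0_norm lnx) ler_wpM2r.
rewrite ler_norml in T1; rewrite ler_norml in Q; rewrite ler_norml in P; rewrite ler_norml.
have [h1 h2] := ssrbool.andP T1; have [h3 h4] := ssrbool.andP Q; have [h5 h6] := ssrbool.andP P.
apply/ssrbool.andP; split; lra.
Qed.
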